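(* Let $X$ be a nonnegative random variable with support $(0,r)$, where $r\in(0,+\infty)$, having finite CIGF $G_X(\alpha,\beta)$ for $(\alpha,\beta)\in D_X$. Assume the moment generating function $M_X(s)=\mathbb{E}(e^{sX})$ satisfies $M_X(s)<+\infty$ for all $s\in(-s_0,s_0)$, for some $s_0>0$. Then: (i) for all $s_1\in(-s_0,0)$, $s_2\in(0,s_0)$ and $(\alpha,\beta)\in D_X$ with $\alpha>0,\beta>0$, $$G_X(\alpha,\beta)\le g(r;\alpha,\beta,\mathbf{s})\,[M_X(s_1)]^\alpha[M_X(s_2)]^\beta;$$ (ii) for all $s_1\in(-s_0,0)$, $s_2\in(0,s_0)$ and $(\alpha,\beta)\in D_X$ with $\alpha<0,\beta<0$, $$G_X(\alpha,\beta)\ge g(r;\alpha,\beta,\mathbf{s})\,[M_X(s_1)]^\alpha[M_X(s_2)]^\beta,$$ where $g(r;\alpha,\beta,\mathbf{s})=\frac{1}{\alpha s_1+\beta s_2}\left[1-e^{-(\alpha s_1+\beta s_2)r}\right]$ if $\alpha s_1+\beta s_2\ne0$, and $g(r;\alpha,\beta,\mathbf{s})=r$ if $\alpha s_1+\beta s_2=0$.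
   Context: For a random variable $X$ with CDF $F$ and survival function $\overline F=1-F$, let $l=\inf\{x:F(x)>0\}$, $r=\sup\{x:\overline F(x)>0\}$. The CIGF of $X$ is $G_X(\alpha,\beta)=\int_l^r [F(x)]^\alpha[\overline F(x)]^\beta\,dx$ on $D_X=\{(\alpha,\beta)\in\mathbb{R}^2: G_X(\alpha,\beta)<\infty\}$. *)

(* Defs.v *)
From HB Require Import structures.
From mathcomp Require Import all_boot all_order all_algebra.
From mathcomp Require Import all_classical all_reals all_analysis.
Set Implicit Arguments. Unset Strict Implicit. Unset Printing Implicit Defensive.
Import Order.TTheory GRing.Theory Num.Theory.
Local Open Scope classical_set_scope.
Local Open Scope ring_scope.

(* Real-valued CDF  F(x) = P(X <= x)  and survival function  Fbar(x) = P(X > x),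
   built from the library's cdf / ccdf (which are \bar R-valued, finite). *)
Definition cdfR d (T : measurableType d) (R : realType) (P : probability T R)
  (X : {RV P >-> R}) (x : R) : R := fine (cdf X x).
Definition sfR d (T : measurableType d) (R : realType) (P : probability T R)
  (X : {RV P >-> R}) (x : R) : R := fine (ccdf X x).

Definition supp_l d (T : measurableType d) (R : realType) (P : probability T R)
  (X : {RV P >-> R}) : \bar R :=
  ereal_inf [set x%:E | x in [set x : R | 0 < cdfR X x]].
Definition supp_r d (T : measurableType d) (R : realType) (P : probability T R)
  (X : {RV P >-> R}) : \bar R :=
  ereal_sup [set x%:E | x in [set x : R | 0 < sfR X x]].

Definition CIGF d (T : measurableType d) (R : realType) (P : probability T R)
  (X : {RV P >-> R}) (a b : R) : \bar R :=
  (\int[lebesgue_measure]_(x in [set x : R | (supp_l X < x%:E)%E /\ (x%:E < supp_r X)%E])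
     ((cdfR X x) `^ a * (sfR X x) `^ b)%:E)%E.

Definition CIGF_dom d (T : measurableType d) (R : realType) (P : probability T R)
  (X : {RV P >-> R}) : set (R * R) :=
  [set ab | (CIGF X ab.1 ab.2 < +oo)%E].

Definition gfun (R : realType) (r a b s1 s2 : R) : R :=
  let c := a * s1 + b * s2 in
  if c != 0 then c^-1 * (1 - expR (- (c * r))) else r.

(* Main.v *)
Require Import Defs.
From HB Require Import structures.
From mathcomp Require Import all_boot all_order all_algebra.
From mathcomp Require Import all_classical all_reals all_analysis.
From mathcomp Require Import measurable_realfun.
From mathcomp Require Import ring lra.
Import Order.TTheory GRing.Theory Num.Theory numFieldNormedType.Exports.
Local Open Scope classical_set_scope.
Local Open Scope ring_scope.
Section SA.
Context {R : realType}.
Notation mu := (@lebesgue_measure R).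

Lemma cexpNM (c : R) : continuous (fun z : R^o => expR (- (c * z))).
Proof.
move=> z; apply: continuous_comp; last exact: continuous_expR.
apply: (@continuousN _ R^o).
by apply: continuousM => //; exact: cst_continuous.
Qed.

Lemma int_exp_cc (c r : R) : 0 < r -> c != 0 ->
  (\int[mu]_(x in `[0%R, r]%classic) (expR (- (c * x)))%:E =
   (c^-1 * (1 - expR (- (c * r))))%:E)%E.
Proof.
move=> r0 c0.
have -> : c^-1 * (1 - expR (- (c * r))) =
   (- c^-1 * expR (- (c * r))) - (- c^-1 * expR (- (c * 0))).
  by rewrite mulr0 oppr0 expR0; ring.
apply: (@continuous_FTC2 _ _ (fun x => - c^-1 * expR (- (c * x)))) => //.
- exact: continuous_subspaceT (cexpNM c).
- split.
  + by move=> z _; exact: ex_derive.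
  + apply/cvg_at_right_filter; apply: cvgMr; exact: cexpNM.
  + apply/cvg_at_left_filter; apply: cvgMr; exact: cexpNM.
- move=> z _.
  rewrite derive1Ml// derive1_comp// derive1E.
  have /funeqP -> := @derive_expR R.
  rewrite derive1N// derive1Ml// derive1_id.
  by field.
Qed.
End SA.
Section SB.
Context d (T : measurableType d) (R : realType) (P : probability T R) (X : {RV P >-> R}).
Definition nXf := fun t => - X t.
Let mnX : measurable_fun setT nXf.
Proof. by apply: measurableT_comp => //. Qed.
HB.instance Definition _ := isMeasurableFun.Build _ _ _ _ nXf mnX.
Definition nX : {RV P >-> R} := nXf.

Lemma mN s : 'M_P (\- X) (- s) = 'M_P X s.
Proof. rewrite /mmt_gen_fun. congr expectation. apply/funext => t /=. by rewrite mulrNN. Qed.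
Lemma cdfb x s : s < 0 -> (cdf X x <= 'M_P X s * (expR (- (s * x)))%:E)%E.
Proof.
move=> s0.
have := chernoff nX (- x) (_ : 0 < - s); rewrite oppr_gt0 => /(_ s0).
rewrite (_ : (nX : T -> R) = \- X) // mN mulrNN. apply: le_trans.
rewrite /cdf /distribution /= /pushforward.
rewrite le_eqVlt; apply/orP; left; apply/eqP; congr (P _).
by apply/seteqP; split => t /=; rewrite in_itv/= lerN2.
Qed.
End SB.
Section S2.
Context d (T : measurableType d) (R : realType) (P : probability T R) (X : {RV P >-> R}).
Lemma ccdfb x s : 0 < s -> (ccdf X x <= 'M_P X s * (expR (- (s * x)))%:E)%E.
Proof.
move=> s0.
have := chernoff X x s0.
apply: le_trans.
rewrite /ccdf /distribution /= /pushforward.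
apply: le_measure; rewrite ?inE.
- rewrite -[X in measurable X]setTI; apply: (measurable_funP X) => //.
- rewrite [X in measurable X](_ : _ = X @^-1` `[x, +oo[ ); last first.
     by apply/seteqP; split => t /=; rewrite !in_itv/= andbT.
  by rewrite -[X in measurable X]setTI; apply: (measurable_funP X) => //.
- by move=> t /=; rewrite in_itv/= andbT => /ltW.
Qed.
End S2.
Section S3.
Context d (T : measurableType d) (R : realType) (P : probability T R) (X : {RV P >-> R}).

Lemma cdfR_pos x : supp_l X = 0%E -> 0 < x -> 0 < cdfR X x.
Proof.
move=> hl x0.
have : (supp_l X < x%:E)%E by rewrite hl lte_fin.
move=> /ereal_inf_lt [e [y /= y0 <-]]; rewrite lte_fin => yx.
apply: (lt_le_trans y0); rewrite /cdfR.
apply: fine_le; rewrite ?fin_num_measure//.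
exact: cdf_nondecreasing (ltW yx).
Qed.

Lemma sfR_pos x r : supp_r X = r%:E -> x < r -> 0 < sfR X x.
Proof.
move=> hr xr.
have : (x%:E < supp_r X)%E by rewrite hr lte_fin.
move=> /ereal_sup_gt [e [y /= y0 <-]]; rewrite lte_fin => xy.
apply: (lt_le_trans y0); rewrite /sfR.
apply: fine_le; rewrite ?fin_num_measure//.
exact: ccdf_nonincreasing (ltW xy).
Qed.
End S3.

Section PW.
Context {R : realType}.
Lemma powRE' (x a : R) : 0 < x -> x `^ a = expR (a * ln x).
Proof. by move=> x0; rewrite /powR gt_eqF. Qed.

Lemma pw (F G A B s1 s2 x a b : R) : 0 < F -> 0 < G ->
  F <= A * expR (- (s1 * x)) -> G <= B * expR (- (s2 * x)) ->
  (0 < a -> 0 < b -> F `^ a * G `^ b <= A `^ a * B `^ b * expR (- ((a * s1 + b * s2) * x))) /\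
  (a < 0 -> b < 0 -> A `^ a * B `^ b * expR (- ((a * s1 + b * s2) * x)) <= F `^ a * G `^ b).
Proof.
move=> F0 G0 hF hG.
have A0 : 0 < A.
  have := lt_le_trans F0 hF; rewrite pmulr_lgt0 //; exact: expR_gt0.
have B0 : 0 < B.
  have := lt_le_trans G0 hG; rewrite pmulr_lgt0 //; exact: expR_gt0.
have lF : ln F <= ln A - s1 * x.
  have := hF; rewrite -ler_ln ?posrE ?mulr_gt0 ?expR_gt0 //.
  by rewrite lnM ?posrE ?expR_gt0 // expRK.
have lG : ln G <= ln B - s2 * x.
  have := hG; rewrite -ler_ln ?posrE ?mulr_gt0 ?expR_gt0 //.
  by rewrite lnM ?posrE ?expR_gt0 // expRK.
rewrite !powRE' // -!expRD !ler_expR.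
split => ha hb; nra.
Qed.
End PW.

Section I.
Context {R : realType}.
Notation mu := (@lebesgue_measure R).
Lemma int_exp_oo (c r : R) : 0 < r ->
  (\int[mu]_(x in `]0%R, r[%classic) (expR (- (c * x)))%:E =
   (if c != 0 then c^-1 * (1 - expR (- (c * r))) else r)%:E)%E.
Proof.
move=> r0.
have mf : measurable_fun [set: R] (EFin \o (fun x : R => expR (- (c * x)))) .
  apply/measurable_EFinP; apply: continuous_measurable_fun; exact: cexpNM.
rewrite integral_itv_obnd_cbnd; last exact: measurable_funTS.
rewrite integral_itv_bndo_bndc; last exact: measurable_funTS.
case: ifPn => c0; first exact: int_exp_cc.
move/negPn: c0 => /eqP ->.
under eq_integral do rewrite mul0r oppr0 expR0.
rewrite integral_cst //= lebesgue_measure_itv /= lte_fin r0 mul1e.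
by rewrite -EFinD subr0.
Qed.
End I.

Theorem proposition4 (d : measure_display) (T : measurableType d) (R : realType)
  (P : probability T R) (X : {RV P >-> R}) (r s0 : R) :
  0 < r ->
  supp_l X = 0%E -> supp_r X = r%:E ->
  0 < s0 ->
  (forall s, - s0 < s < s0 -> ('M_P X s < +oo)%E) ->
  (forall s1 s2 a b, - s0 < s1 < 0 -> 0 < s2 < s0 ->
     (a, b) \in CIGF_dom X -> 0 < a -> 0 < b ->
     (CIGF X a b <= (gfun r a b s1 s2 * (fine ('M_P X s1)) `^ a
                                     * (fine ('M_P X s2)) `^ b)%:E)%E) /\
  (forall s1 s2 a b, - s0 < s1 < 0 -> 0 < s2 < s0 ->
     (a, b) \in CIGF_dom X -> a < 0 -> b < 0 ->
     ((gfun r a b s1 s2 * (fine ('M_P X s1)) `^ a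
                        * (fine ('M_P X s2)) `^ b)%:E <= CIGF X a b)%E).
Proof.
move=> r0 hl hr s00 hM.
have Mfin s : - s0 < s < s0 -> ('M_P X s) \is a fin_num.
  move=> hs; rewrite ge0_fin_numE ?hM //; apply: expectation_ge0 => t /=.
  exact: expR_ge0.
have Dset : [set x : R | (supp_l X < x%:E)%E /\ (x%:E < supp_r X)%E] = `]0%R, r[%classic.
  rewrite hl hr; apply/seteqP; split => x /=; rewrite in_itv /= !lte_fin.
    by case=> -> ->.
  by move=> /andP[-> ->].
have key s1 s2 x : - s0 < s1 < 0 -> 0 < s2 < s0 -> 0 < x < r ->
   [/\ 0 < cdfR X x, 0 < sfR X x,
       cdfR X x <= fine ('M_P X s1) * expR (- (s1 * x))
     & sfR X x <= fine ('M_P X s2) * expR (- (s2 * x))].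
  move=> /andP[hs1 hs1'] /andP[hs2 hs2'] /andP[x0 xr]; split.
  - exact: cdfR_pos.
  - exact: sfR_pos hr xr.
  - rewrite -lee_fin EFinM /cdfR fineK ?fin_num_measure // fineK;
      last by apply: Mfin; rewrite hs1 (lt_trans hs1' s00).
    exact: cdfb.
  - rewrite -lee_fin EFinM /sfR fineK ?fin_num_measure // fineK;
      last by apply: Mfin; rewrite hs2' (lt_trans _ hs2) // oppr_lt0.
    exact: ccdfb.
have mh a b : measurable_fun `]0%R, r[%classic
    (fun x => ((cdfR X x) `^ a * (sfR X x) `^ b)%:E).
  have m1 : measurable_fun `]0%R, r[%classic (cdfR X).
    apply: nondecreasing_measurable => // u v uv; rewrite /cdfR.
    by apply: fine_le; rewrite ?fin_num_measure//; exact: cdf_nondecreasing.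
  have m2 : measurable_fun `]0%R, r[%classic (sfR X).
    apply: nonincreasing_measurable => // u v uv; rewrite /sfR.
    by apply: fine_le; rewrite ?fin_num_measure//; exact: ccdf_nonincreasing.
  apply/measurable_EFinP; apply: measurable_funM.
  - exact: (measurableT_comp (measurable_powR a) m1).
  - exact: (measurableT_comp (measurable_powR b) m2).
have me c : measurable_fun `]0%R, r[%classic (fun x : R => expR (- (c * x))).
  by apply: measurable_funTS; apply: continuous_measurable_fun; exact: cexpNM.
have mk K c : measurable_fun `]0%R, r[%classic (fun x => (K * expR (- (c * x)))%:E).
  by apply/measurable_EFinP; apply: measurable_funM => //.
have intk K c : 0 <= K ->
    (\int[lebesgue_measure]_(x in `]0%R, r[%classic) (K * expR (- (c * x)))%:E =
    (K * (if c != 0 then c^-1 * (1 - expR (- (c * r))) else r))%:E)%E.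
  move=> K0; under eq_integral do rewrite EFinM.
  rewrite ge0_integralZl_EFin //; first by rewrite int_exp_oo // EFinM.
  by apply/measurable_EFinP; exact: me.
split.
- move=> s1 s2 a b hs1 hs2 _ a0 b0.
  rewrite /CIGF Dset.
  set A := fine _; set B := fine _.
  rewrite (_ : gfun r a b s1 s2 * A `^ a * B `^ b = (A `^ a * B `^ b) * gfun r a b s1 s2);
    last by rewrite -mulrA mulrC.
  rewrite /gfun /= -intk; last by rewrite mulr_ge0 ?powR_ge0.
  apply: ge0_le_integral.
  - exact: measurable_itv.
  - by move=> x _; rewrite lee_fin mulr_ge0 ?powR_ge0.
  - exact: mh.
  - exact: mk.
  - move=> x; rewrite /= => /[!in_itv] /= hx.
    have [h1 h2 h3 h4] := key s1 s2 x hs1 hs2 hx.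
    have [H _] := pw _ _ _ _ _ _ _ a b h1 h2 h3 h4.
    by rewrite lee_fin; apply: H.
- move=> s1 s2 a b hs1 hs2 _ a0 b0.
  rewrite /CIGF Dset.
  set A := fine _; set B := fine _.
  rewrite (_ : gfun r a b s1 s2 * A `^ a * B `^ b = (A `^ a * B `^ b) * gfun r a b s1 s2);
    last by rewrite -mulrA mulrC.
  rewrite /gfun /= -intk; last by rewrite mulr_ge0 ?powR_ge0.
  apply: ge0_le_integral.
  - exact: measurable_itv.
  - by move=> x _; rewrite lee_fin !mulr_ge0 ?powR_ge0 ?expR_ge0.
  - exact: mk.
  - exact: mh.
  - move=> x; rewrite /= => /[!in_itv] /= hx.
    have [h1 h2 h3 h4] := key s1 s2 x hs1 hs2 hx.
    have [_ H] := pw _ _ _ _ _ _ _ a b h1 h2 h3 h4.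
    by rewrite lee_fin; apply: H.
Qed.
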